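(* Let $\gamma$ be a smooth, convex closed curve in the Euclidean plane with curvature $\kappa>0$, which is a Gutkin curve with contact angle $\alpha$, and let $x(t),y(t)$ be the corresponding chord parameterizations, where $x,y$ denote arc-length coordinates on $\gamma$ and $'$ denotes $d/dt$. Then along this family of chords $\kappa(x(t))\,x'(t)=\kappa(y(t))\,y'(t)$; equivalently, if the parameter $t$ is chosen so that $x'(t)=a/\kappa(x(t))$ for a constant $a$, then also $y'(t)=a/\kappa(y(t))$, so that the values of this parameter at the two endpoints of each chord differ by a constant.
   Context: A smooth convex oriented closed curve $C$ in $\mathbb{E}^2$ is a Gutkin curve with contact angle $\alpha\in(0,\pi]$ if there are parameterizations $x(t),y(t)$ of $C$ with $x'(t),y'(t)>0$, $x(t)\neq y(t)$, such that for every $t$ the angle at $x(t)$ between the positively oriented tangent of $C$ and the chord direction towards $y(t)$, and the angle at $y(t)$ between the chord direction (from $x(t)$ towards $y(t)$) and the positively oriented tangent of $C$, both equal $\alpha$. *)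

(* Defs.v *)
From Stdlib Require Import Reals Lra.
From Coquelicot Require Import Coquelicot.
Open Scope R_scope.

(* A plane curve is given by its two coordinate functions g1 g2 : R -> R. *)

Definition smooth (f : R -> R) : Prop := forall (n : nat) (s : R), ex_derive_n f n s.

Definition unit_speed (g1 g2 : R -> R) : Prop :=
  forall s, (Derive g1 s) ^ 2 + (Derive g2 s) ^ 2 = 1.

Definition closed_simple (g1 g2 : R -> R) (L : R) : Prop :=
  0 < L /\
  (forall s, g1 (s + L) = g1 s /\ g2 (s + L) = g2 s) /\
  (forall s u, 0 <= s < L -> 0 <= u < L -> g1 s = g1 u -> g2 s = g2 u -> s = u).

Definition det2 (a1 a2 b1 b2 : R) : R := a1 * b2 - a2 * b1.

(* convexity: the whole curve lies on one side of each tangent line *)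
Definition convex_curve (g1 g2 : R -> R) : Prop :=
  forall s,
    (forall u, 0 <= det2 (Derive g1 s) (Derive g2 s) (g1 u - g1 s) (g2 u - g2 s)) \/
    (forall u, det2 (Derive g1 s) (Derive g2 s) (g1 u - g1 s) (g2 u - g2 s) <= 0).

(* signed curvature of an arc-length parameterized curve *)
Definition curvature (g1 g2 : R -> R) (s : R) : R :=
  Derive g1 s * Derive_n g2 2 s - Derive g2 s * Derive_n g1 2 s.

(* (unoriented) angle in [0, pi] between two nonzero plane vectors *)
Definition angle (a1 a2 b1 b2 : R) : R :=
  acos ((a1 * b1 + a2 * b2) / (sqrt (a1 ^ 2 + a2 ^ 2) * sqrt (b1 ^ 2 + b2 ^ 2))).

(* Gutkin curve with contact angle alpha, witnessed by the arc-length
   parameterizations x, y of the chord endpoints *)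
Definition gutkin_chords (g1 g2 : R -> R) (alpha : R) (x y : R -> R) : Prop :=
  (forall t, ex_derive x t /\ 0 < Derive x t) /\
  (forall t, ex_derive y t /\ 0 < Derive y t) /\
  (forall s, exists t, g1 (x t) = g1 s /\ g2 (x t) = g2 s) /\
  (forall s, exists t, g1 (y t) = g1 s /\ g2 (y t) = g2 s) /\
  (forall t,
     let p1 := g1 (x t) in let p2 := g2 (x t) in
     let q1 := g1 (y t) in let q2 := g2 (y t) in
     (p1, p2) <> (q1, q2) /\
     angle (Derive g1 (x t)) (Derive g2 (x t)) (q1 - p1) (q2 - p2) = alpha /\
     angle (q1 - p1) (q2 - p2) (Derive g1 (y t)) (Derive g2 (y t)) = alpha).

(* Main.v *)
Require Import Defs.
From Stdlib Require Import Reals Lra.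
From Coquelicot Require Import Coquelicot.
Open Scope R_scope.

Lemma d1 (g : R -> R) s : smooth g -> is_derive g s (Derive g s).
Proof. intros H. apply Derive_correct. exact (H 1%nat s). Qed.

Lemma d2 (g : R -> R) s : smooth g -> is_derive (Derive g) s (Derive_n g 2 s).
Proof. intros H. apply (Derive_correct (Derive_n g 1)). exact (H 2%nat s). Qed.

Lemma convex_left g1 g2 : smooth g1 -> smooth g2 -> convex_curve g1 g2 ->
  (forall s, 0 < curvature g1 g2 s) ->
  forall s u, 0 <= det2 (Derive g1 s) (Derive g2 s) (g1 u - g1 s) (g2 u - g2 s).
Proof.
  intros S1 S2 Hc Hk s.
  destruct (Hc s) as [H|H]; [exact H|exfalso].
  set (T1 := Derive g1 s). set (T2 := Derive g2 s).
  set (h := fun v => T1 * (g2 v - g2 s) - T2 * (g1 v - g1 s)).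
  set (k := fun v => T1 * Derive g2 v - T2 * Derive g1 v).
  assert (Hh : forall v, is_derive h v (k v)).
  { intros v. unfold h, k.
    assert (E: T1 * Derive g2 v - T2 * Derive g1 v =
       T1 * (Derive g2 v - 0) - T2 * (Derive g1 v - 0)) by ring.
    auto_derive. split; [apply (S2 1%nat v)|split;[apply (S1 1%nat v)|exact I]].
    rewrite !Rmult_1_l; unfold Rminus; reflexivity. }
  assert (Hk' : is_derive k s (curvature g1 g2 s)).
  { unfold k, curvature. fold T1 T2.
    assert (E: T1 * Derive_n g2 2 s - T2 * Derive_n g1 2 s =
       T1 * Derive_n g2 2 s - T2 * Derive_n g1 2 s) by ring.
    apply (is_derive_ext (fun v => T1 * Derive_n g2 1 v - T2 * Derive_n g1 1 v)); [reflexivity|].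
    auto_derive. split; [apply (S2 2%nat s)|split;[apply (S1 2%nat s)|exact I]].
    simpl. ring. }
  assert (k0 : k s = 0) by (unfold k; fold T1 T2; ring).
  apply is_derive_Reals in Hk'.
  destruct (Hk' (curvature g1 g2 s) (Hk s)) as [d Hd].
  assert (Hpos : forall v, s < v < s + d -> 0 < k v).
  { intros v Hv. specialize (Hd (v - s)). replace (s + (v - s)) with v in Hd by ring.
    rewrite k0 in Hd.
    assert (Hv0 : v - s <> 0) by lra.
    assert (Hvd : Rabs (v - s) < d) by (rewrite Rabs_right; lra).
    specialize (Hd Hv0 Hvd).
    apply Rabs_def2 in Hd. destruct Hd as [_ Hd].
    assert (0 < (k v - 0) / (v - s)) by lra.
    assert (0 < v - s) by lra.
    replace (k v) with ((k v - 0) / (v - s) * (v - s)) by (field; lra).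
    apply Rmult_lt_0_compat; lra. }
  destruct (MVT_cor2 h k s (s + d/2)) as [c [Hc1 Hc2]].
  - destruct d; simpl; lra.
  - intros c _. apply is_derive_Reals. apply Hh.
  - assert (h s = 0) by (unfold h; ring).
    assert (0 < k c) by (apply Hpos; destruct d; simpl in *; lra).
    assert (0 < h (s + d/2)).
    { assert (h (s + d / 2) = k c * (s + d / 2 - s)) by lra.
      rewrite H2. apply Rmult_lt_0_compat; destruct d; simpl in *; lra. }
    specialize (H (s + d/2)). unfold det2 in H. unfold h in H2. fold T1 T2 in H. lra.
Qed.

Lemma rot_rel A1 A2 B1 B2 c1 c2 r C0 S0 : 0 < r ->
  A1^2 + A2^2 = 1 -> c1^2 + c2^2 = r^2 ->
  A1*c1 + A2*c2 = r*C0 -> A1*c2 - A2*c1 = r*S0 ->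
  c1*B1 + c2*B2 = r*C0 -> c1*B2 - c2*B1 = r*S0 ->
  B1 = (C0^2 - S0^2)*A1 - 2*S0*C0*A2 /\ B2 = 2*S0*C0*A1 + (C0^2 - S0^2)*A2.
Proof.
  intros Hr HA Hc H1 H2 H3 H4.
  assert (E1: A1*(A1*c1+A2*c2) - A2*(A1*c2-A2*c1) = c1*(A1^2+A2^2)) by ring.
  assert (E2: A2*(A1*c1+A2*c2) + A1*(A1*c2-A2*c1) = c2*(A1^2+A2^2)) by ring.
  rewrite H1, H2, HA in E1, E2.
  assert (F1: c1*(c1*B1+c2*B2) - c2*(c1*B2-c2*B1) = B1*(c1^2+c2^2)) by ring.
  assert (F2: c2*(c1*B1+c2*B2) + c1*(c1*B2-c2*B1) = B2*(c1^2+c2^2)) by ring.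
  rewrite H3, H4, Hc in F1, F2.
  assert (c1 = r*(C0*A1 - S0*A2)) by lra.
  assert (c2 = r*(S0*A1 + C0*A2)) by lra.
  subst c1 c2.
  split; apply (Rmult_eq_reg_l (r^2)); try (apply pow_nonzero; lra).
  - rewrite Rmult_comm, <- F1. ring.
  - rewrite Rmult_comm, <- F2. ring.
Qed.

Lemma angle_info A1 A2 c1 c2 alpha : A1^2 + A2^2 = 1 -> 0 < c1^2 + c2^2 ->
  0 < alpha <= PI ->
  forall D, D^2 = (A1*c2 - A2*c1)^2 ->
  angle A1 A2 c1 c2 = alpha -> 0 <= D ->
  A1*c1 + A2*c2 = sqrt (c1^2+c2^2) * cos alpha /\
  D = sqrt (c1^2+c2^2) * sin alpha.
Proof.
  intros HA Hc Ha D HD Hang Hd.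
  set (r := sqrt (c1^2+c2^2)).
  assert (Hr : 0 < r) by (apply sqrt_lt_R0; lra).
  assert (Hr2 : r^2 = c1^2+c2^2) by (unfold r; rewrite <- Rsqr_pow2; apply Rsqr_sqrt; lra).
  assert (Hid : (A1*c1 + A2*c2)^2 + (A1*c2 - A2*c1)^2 = r^2)
    by (rewrite Hr2, <- (Rmult_1_l (c1^2+c2^2)), <- HA; ring).
  unfold angle in Hang. rewrite HA, sqrt_1, Rmult_1_l in Hang. fold r in Hang.
  set (v := (A1*c1 + A2*c2)/r) in Hang.
  assert (Hv : -1 <= v <= 1).
  { unfold v. assert (Habs: (A1*c1+A2*c2)^2 <= r^2) by nra.
    split.
    - apply (Rmult_le_reg_r r); [lra|]. unfold Rdiv. rewrite Rmult_assoc, Rinv_l by lra. nra.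
    - apply (Rmult_le_reg_r r); [lra|]. unfold Rdiv. rewrite Rmult_assoc, Rinv_l by lra. nra. }
  assert (Hcos : cos alpha = v) by (rewrite <- Hang; apply cos_acos; exact Hv).
  assert (E1 : A1*c1 + A2*c2 = r * cos alpha) by (rewrite Hcos; unfold v; field; lra).
  split; [exact E1|].
  assert (Hs : 0 <= sin alpha) by (apply sin_ge_0; lra).
  assert (Hsc := sin2_cos2 alpha). unfold Rsqr in Hsc.
  assert (Hd2 : D^2 = (r * sin alpha)^2).
  { rewrite E1 in Hid. rewrite HD. nra. }
  assert (0 <= r * sin alpha) by nra.
  nra.
Qed.

Lemma angle_comm a1 a2 b1 b2 : angle a1 a2 b1 b2 = angle b1 b2 a1 a2.
Proof. unfold angle. f_equal. f_equal; ring. Qed.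

Theorem mainTheorem3 (g1 g2 : R -> R) (L alpha : R) (x y : R -> R) :
  smooth g1 -> smooth g2 ->
  unit_speed g1 g2 ->
  closed_simple g1 g2 L ->
  convex_curve g1 g2 ->
  (forall s, 0 < curvature g1 g2 s) ->
  0 < alpha <= PI ->
  gutkin_chords g1 g2 alpha x y ->
  (forall t, curvature g1 g2 (x t) * Derive x t = curvature g1 g2 (y t) * Derive y t) /\
  (forall a : R,
     (forall t, Derive x t = a / curvature g1 g2 (x t)) ->
     forall t, Derive y t = a / curvature g1 g2 (y t)).
Proof.
  intros S1 S2 Hu _ Hcv Hk Ha [Hx [Hy [_ [_ Hg]]]].
  set (C := cos alpha ^ 2 - sin alpha ^ 2). set (S := 2 * sin alpha * cos alpha).
  assert (HCS : C^2 + S^2 = 1).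
  { unfold C, S. assert (H := sin2_cos2 alpha). unfold Rsqr in H.
    replace 1 with ((sin alpha * sin alpha + cos alpha * cos alpha)^2) by (rewrite H; ring).
    ring. }
  assert (Rel : forall t, Derive g1 (y t) = C * Derive g1 (x t) - S * Derive g2 (x t) /\
                          Derive g2 (y t) = S * Derive g1 (x t) + C * Derive g2 (x t)).
  { intros t. destruct (Hg t) as [Hne [Ang1 Ang2]].
    set (A1 := Derive g1 (x t)) in *. set (A2 := Derive g2 (x t)) in *.
    set (B1 := Derive g1 (y t)) in *. set (B2 := Derive g2 (y t)) in *.
    set (c1 := g1 (y t) - g1 (x t)) in *. set (c2 := g2 (y t) - g2 (x t)) in *.
    assert (HA : A1^2 + A2^2 = 1) by apply Hu.
    assert (HB : B1^2 + B2^2 = 1) by apply Hu.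
    assert (Hc : 0 < c1^2 + c2^2).
    { destruct (Req_dec c1 0) as [e1|e1]; [destruct (Req_dec c2 0) as [e2|e2]|].
      - exfalso. apply Hne. unfold c1, c2 in *. f_equal; lra.
      - assert (0 < c2^2) by (apply pow2_gt_0; exact e2). nra.
      - assert (0 < c1^2) by (apply pow2_gt_0; exact e1). nra. }
    assert (D1 := convex_left g1 g2 S1 S2 Hcv Hk (x t) (y t)).
    assert (D2 := convex_left g1 g2 S1 S2 Hcv Hk (y t) (x t)).
    unfold det2 in D1, D2. fold A1 A2 c1 c2 B1 B2 in D1, D2.
    destruct (angle_info A1 A2 c1 c2 alpha HA Hc Ha (A1*c2 - A2*c1) eq_refl Ang1 D1) as [E1 E2].
    rewrite angle_comm in Ang2.
    assert (Hc' : 0 < c1^2 + c2^2) by exact Hc.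
    destruct (angle_info B1 B2 c1 c2 alpha HB Hc Ha (c1*B2 - c2*B1)) as [E3 E4].
    { ring. } { exact Ang2. }
    { replace (g1 (x t) - g1 (y t)) with (-c1) in D2 by (unfold c1; ring).
      replace (g2 (x t) - g2 (y t)) with (-c2) in D2 by (unfold c2; ring). lra. }
    assert (Hr : 0 < sqrt (c1^2+c2^2)) by (apply sqrt_lt_R0; lra).
    assert (Hr2 : c1^2+c2^2 = sqrt (c1^2+c2^2)^2)
      by (symmetry; apply pow2_sqrt; lra).
    destruct (rot_rel A1 A2 B1 B2 c1 c2 (sqrt (c1^2+c2^2)) (cos alpha) (sin alpha) Hr HA Hr2 E1 E2)
      as [R1 R2]; [lra|exact E4|].
    unfold C, S. split; [rewrite R1|rewrite R2]; ring. }
  assert (Main : forall t, curvature g1 g2 (x t) * Derive x t = curvature g1 g2 (y t) * Derive y t).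
  { intros t.
    assert (DY1 : is_derive (fun t => Derive g1 (y t)) t (Derive y t * Derive_n g1 2 (y t))).
    { apply (is_derive_comp (Derive g1) y t). apply d2; auto. apply Derive_correct; apply Hy. }
    assert (DY2 : is_derive (fun t => Derive g2 (y t)) t (Derive y t * Derive_n g2 2 (y t))).
    { apply (is_derive_comp (Derive g2) y t). apply d2; auto. apply Derive_correct; apply Hy. }
    assert (DX1 : is_derive (fun t => Derive g1 (x t)) t (Derive x t * Derive_n g1 2 (x t))).
    { apply (is_derive_comp (Derive g1) x t). apply d2; auto. apply Derive_correct; apply Hx. }
    assert (DX2 : is_derive (fun t => Derive g2 (x t)) t (Derive x t * Derive_n g2 2 (x t))).
    { apply (is_derive_comp (Derive g2) x t). apply d2; auto. apply Derive_correct; apply Hx. }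
    assert (DZ1 : is_derive (fun t => C * Derive g1 (x t) - S * Derive g2 (x t)) t
          (C * (Derive x t * Derive_n g1 2 (x t)) - S * (Derive x t * Derive_n g2 2 (x t)))).
    { exact (is_derive_minus _ _ t _ _ (is_derive_scal _ _ C _ DX1) (is_derive_scal _ _ S _ DX2)). }
    assert (DZ2 : is_derive (fun t => S * Derive g1 (x t) + C * Derive g2 (x t)) t
          (S * (Derive x t * Derive_n g1 2 (x t)) + C * (Derive x t * Derive_n g2 2 (x t)))).
    { exact (is_derive_plus _ _ t _ _ (is_derive_scal _ _ S _ DX1) (is_derive_scal _ _ C _ DX2)). }
    assert (Q1 : Derive y t * Derive_n g1 2 (y t) =
        C * (Derive x t * Derive_n g1 2 (x t)) - S * (Derive x t * Derive_n g2 2 (x t))).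
    { rewrite <- (is_derive_unique _ _ _ DY1). apply is_derive_unique.
      apply (is_derive_ext (fun t => C * Derive g1 (x t) - S * Derive g2 (x t))); [|exact DZ1].
      intros s; symmetry; apply Rel. }
    assert (Q2 : Derive y t * Derive_n g2 2 (y t) =
        S * (Derive x t * Derive_n g1 2 (x t)) + C * (Derive x t * Derive_n g2 2 (x t))).
    { rewrite <- (is_derive_unique _ _ _ DY2). apply is_derive_unique.
      apply (is_derive_ext (fun t => S * Derive g1 (x t) + C * Derive g2 (x t))); [|exact DZ2].
      intros s; symmetry; apply Rel. }
    unfold curvature. destruct (Rel t) as [R1 R2].
    replace ((Derive g1 (y t) * Derive_n g2 2 (y t) - Derive g2 (y t) * Derive_n g1 2 (y t)) * Derive y t)
      with (Derive g1 (y t) * (Derive y t * Derive_n g2 2 (y t)) - Derive g2 (y t) * (Derive y t * Derive_n g1 2 (y t))) by ring.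
    rewrite Q1, Q2, R1, R2.
    replace ((Derive g1 (x t) * Derive_n g2 2 (x t) - Derive g2 (x t) * Derive_n g1 2 (x t)) * Derive x t)
      with ((C^2+S^2) * ((Derive g1 (x t) * Derive_n g2 2 (x t) - Derive g2 (x t) * Derive_n g1 2 (x t)) * Derive x t))
      by (rewrite HCS; ring).
    ring. }
  split; [exact Main|].
  intros a Ha' t. specialize (Main t). rewrite Ha' in Main.
  assert (K1 := Hk (x t)). assert (K2 := Hk (y t)).
  apply (Rmult_eq_reg_l (curvature g1 g2 (y t))); [|lra].
  rewrite <- Main. field. lra.
Qed.
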